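(* For $0<p<q<1$, \[ (1-q)\,d(p,q)\le d_{\mathrm{Pois}}(p,q)\le d(p,q). \]
   Context: $d(p,q)=p\log(p/q)+(1-p)\log((1-p)/(1-q))$ is the Bernoulli Kullback–Leibler divergence and $d_{\mathrm{Pois}}(p,q)=p\log(p/q)+q-p$ the Poisson Kullback–Leibler divergence. *)

(* Defs.v *)
From Stdlib Require Import Reals.
Open Scope R_scope.

Definition kl_bern (p q : R) : R :=
  p * ln (p / q) + (1 - p) * ln ((1 - p) / (1 - q)).

Definition kl_pois (p q : R) : R :=
  p * ln (p / q) + q - p.

(* Main.v *)
Require Import Defs.
From Stdlib Require Import Reals Lra.
From Coquelicot Require Import Coquelicot.
Open Scope R_scope.

Lemma ln_le_sub1 (y : R) : 0 < y -> ln y <= y - 1.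
Proof. intros Hy. pose proof (exp_ineq1_le (ln y)). rewrite exp_ln in H; lra. Qed.

Theorem lemma8 (p q : R) (hp : 0 < p) (hpq : p < q) (hq : q < 1) :
  (1 - q) * kl_bern p q <= kl_pois p q /\ kl_pois p q <= kl_bern p q.
Proof.
  unfold kl_bern, kl_pois.
  split.
  - set (g := fun x => q * x * (ln x - ln q) + q - x - (1 - q) * (1 - x) * (ln (1 - x) - ln (1 - q))).
    set (g' := fun x => q * (ln x - ln q) + (1 - q) * (ln (1 - x) - ln (1 - q))).
    assert (Hd : forall c, p <= c <= q -> derivable_pt_lim g c (g' c)).
    { intros c Hc. apply is_derive_Reals. unfold g, g'.
      auto_derive.
      - repeat split; lra.
      - replace (1 + - c) with (1 - c) by ring. field; lra. }
    destruct (MVT_cor2 g g' p q hpq Hd) as [c [Heq Hc]].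
    assert (Hg' : g' c <= 0).
    { unfold g'.
      assert (H := ln_le_sub1 (c / q) ltac:(apply Rdiv_lt_0_compat; lra)).
      assert (H0 := ln_le_sub1 ((1 - c) / (1 - q)) ltac:(apply Rdiv_lt_0_compat; lra)).
      rewrite ln_div in H by lra. rewrite ln_div in H0 by lra.
      assert (q * (ln c - ln q) <= q * (c / q - 1)) by (apply Rmult_le_compat_l; lra).
      assert ((1-q) * (ln (1 - c) - ln (1 - q)) <= (1-q) * ((1 - c) / (1 - q) - 1))
        by (apply Rmult_le_compat_l; lra).
      assert (q * (c / q - 1) + (1-q) * ((1 - c) / (1 - q) - 1) = 0) by (field; lra).
      lra. }
    assert (Hgq : g q = 0) by (unfold g; ring).
    assert (g p >= 0).
    { assert (g' c * (q - p) <= 0).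
      { apply Rmult_le_0_r; lra. }
      lra. }
    unfold g in H.
    rewrite !ln_div by lra. nra.
  - assert (H := ln_le_sub1 ((1 - q) / (1 - p)) ltac:(apply Rdiv_lt_0_compat; lra)).
    rewrite ln_div in H by lra.
    rewrite ln_div with (x := 1 - p) by lra.
    assert ((1-p) * (ln (1 - q) - ln (1 - p)) <= (1-p) * ((1 - q) / (1 - p) - 1))
      by (apply Rmult_le_compat_l; lra).
    assert ((1-p) * ((1 - q) / (1 - p) - 1) = p - q) by (field; lra).
    lra.
Qed.
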